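(* Let $K$ be a field of characteristic $p>0$ such that $K/k$ is a finitely generated field extension, where $k=\bigcap_{n\ge0}K^{p^n}$. Let $W$ be a subfield with $k\subseteq W\subseteq K$, and let $W_n=W\cdot K^{p^n}$. Then $\operatorname{Diff}_W(K)=\bigcup_{n\ge0}\operatorname{Diff}_{W_n}(K)$.
   Context: $\cdot$ denotes the compositum in $K$. For subfields $A\subseteq B$, $\operatorname{Diff}_A(B)$ is the union over $n\ge0$ of the sets of $A$-linear maps $D:B\to B$ with $[b_0,[b_1,[\ldots,[b_n,D]\ldots]]]=0$ for all $b_i\in B$ (elements acting by multiplication, $[X,Y]=XY-YX$). *)

(* Defs.v *)
From mathcomp Require Import all_boot all_algebra.
Set Implicit Arguments. Unset Strict Implicit. Unset Printing Implicit Defensive.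
Import GRing.Theory.
Local Open Scope ring_scope.

Section Defs.
Variable K : fieldType.

Definition is_subfield (S : K -> Prop) : Prop :=
  [/\ S 0, S 1,
      (forall x y, S x -> S y -> S (x - y)),
      (forall x y, S x -> S y -> S (x * y)) &
      (forall x, S x -> S x^-1)].

Definition gen_field (S : K -> Prop) : K -> Prop :=
  fun x => forall F, is_subfield F -> (forall y, S y -> F y) -> F x.

Definition pow_field (m : nat) : K -> Prop := fun x => exists y : K, x = y ^+ m.

Definition perfect_core (p : nat) : K -> Prop :=
  fun x => forall n : nat, pow_field (p ^ n) x.

Definition compositum (A B : K -> Prop) : K -> Prop :=
  gen_field (fun x => A x \/ B x).

Definition fin_gen_over (F : K -> Prop) : Prop :=
  exists s : seq K, forall x, gen_field (fun y => F y \/ y \in s) x.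

Definition op_comm (b : K) (D : K -> K) : K -> K := fun x => b * D x - D (b * x).

Definition iter_comm (bs : seq K) (D : K -> K) : K -> K := foldr op_comm D bs.

Definition linear_over (A : K -> Prop) (D : K -> K) : Prop :=
  (forall x y, D (x + y) = D x + D y) /\ (forall a x, A a -> D (a * x) = a * D x).

Definition is_diffop_order (A : K -> Prop) (n : nat) (D : K -> K) : Prop :=
  linear_over A D /\
  forall bs : seq K, size bs = n.+1 -> forall x, iter_comm bs D x = 0.

Definition Diff (A : K -> Prop) (D : K -> K) : Prop :=
  exists n : nat, is_diffop_order A n D.

End Defs.

(* Main.v *)
Require Import Defs.
From mathcomp Require Import all_boot all_algebra.
Set Implicit Arguments. Unset Strict Implicit. Unset Printing Implicit Defensive.
Import GRing.Theory.
Local Open Scope ring_scope.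

Section Aux.
Variable K : fieldType.
Variable E : K -> K.
Variable b : K.

Definition phi (x : K) (P : {poly K}) := \sum_(i < size P) P`_i * E (b ^+ i * x).

Lemma phi_ext x N (P : {poly K}) : (size P <= N)%N -> phi x P = \sum_(i < N) P`_i * E (b ^+ i * x).
Proof.
move=> H; rewrite /phi (big_ord_widen N (fun i => P`_i * E (b ^+ i * x)) H).
rewrite big_mkcond; apply: eq_bigr => i _; case: ltnP => // h.
by rewrite nth_default // mul0r.
Qed.

Lemma phiB x (A B : {poly K}) : phi x (A - B) = phi x A - phi x B.
Proof.
have hA : (size A <= size A + size B)%N by apply: leq_addr.
have hB : (size B <= size A + size B)%N by apply: leq_addl.
have hAB : (size (A - B)%R <= size A + size B)%N.
  apply: leq_trans (size_polyD _ _) _; by rewrite size_polyN geq_max hA hB.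
rewrite !(phi_ext x hA, phi_ext x hB, phi_ext x hAB) -sumrB.
by apply: eq_bigr => i _; rewrite coefB mulrBl.
Qed.

Lemma phiC x c (Q : {poly K}) : phi x (c%:P * Q) = c * phi x Q.
Proof.
have h1 : (size (c%:P * Q)%R <= size Q)%N by rewrite mul_polyC size_scale_leq.
rewrite (phi_ext x h1) /phi mulr_sumr; apply: eq_bigr => i _.
by rewrite coefCM mulrA.
Qed.

Lemma phiX x (Q : {poly K}) : phi x ('X * Q) = phi (b * x) Q.
Proof.
have h1 : (size ('X * Q)%R <= (size Q).+1)%N.
  apply: leq_trans (size_polyMleq _ _) _; by rewrite size_polyX.
rewrite (phi_ext x h1) big_ord_recl coefXM eqxx mul0r add0r /phi.
apply: eq_bigr => i _; rewrite coefXM /= exprSr -mulrA //.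
Qed.

Lemma phi1 x : phi x 1 = E x.
Proof. by rewrite /phi size_poly1 big_ord1 coefC eqxx mul1r expr0 mul1r. Qed.

Lemma phiXn q x : phi x ('X ^+ q) = E (b ^+ q * x).
Proof.
elim: q x => [|q IH] x; first by rewrite expr0 phi1 expr0 mul1r.
by rewrite exprS phiX IH exprSr mulrA.
Qed.

Lemma iter_nseq k x :
  iter_comm (nseq k b) E x = phi x ((b%:P - 'X) ^+ k).
Proof.
elim: k x => [|k IH] x; first by rewrite expr0 phi1.
rewrite /= /op_comm !IH exprS mulrBl phiB phiC phiX //.
Qed.

End Aux.

Lemma frobn (R : comRingType) (p : nat) (a c : R) :
  (p \in [pchar R])%N -> forall n, (a - c) ^+ (p ^ n) = a ^+ (p ^ n) - c ^+ (p ^ n).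
Proof.
move=> hp; elim=> [|n IH]; first by rewrite !expr1.
rewrite expnSr !exprM IH.
by have := pFrobenius_autB_comm hp (mulrC (a ^+ (p ^ n)) (c ^+ (p ^ n))); rewrite !pFrobenius_autE.
Qed.

Lemma iter_big (K : fieldType) (E : K -> K) m :
  (forall bs : seq K, size bs = m.+1 -> forall x, iter_comm bs E x = 0) ->
  forall bs : seq K, (m.+1 <= size bs)%N -> forall x, iter_comm bs E x = 0.
Proof.
move=> H; elim=> [|c bs IH] //= hs x.
case: (ltnP m (size bs)) => h.
  by rewrite /op_comm (IH h x) (IH h (c * x)) mulr0 subr0.
apply: (H (c :: bs)); rewrite /=; congr (_.+1); apply/eqP; rewrite eqn_leq h; exact: hs.
Qed.

Theorem lemmaL2 (K : fieldType) (p : nat) (W : K -> Prop) :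
  (p \in [pchar K])%N ->
  @fin_gen_over K (perfect_core p) ->
  is_subfield W ->
  (forall x, @perfect_core K p x -> W x) ->
  forall D : K -> K,
    Diff W D <-> exists n : nat, Diff (compositum W (@pow_field K (p ^ n))) D.
Proof.
move=> hp _ hW _ D; split; last first.
  move=> [n [m [[hadd hlin] hord]]]; exists m; split => //; split => // a x Wa.
  by apply: hlin => F _ hF; apply: hF; left.
move=> [m [[hadd hlin] hord]].
have D0 : D 0 = 0.
  have h := hadd 0 0; rewrite addr0 in h.
  by apply: (addrI (D 0)); rewrite addr0 -h.
have DN : forall v, D (- v) = - D v.
  by move=> v; apply: (addrI (D v)); rewrite -hadd !addrN D0.
have p2 : (1 < p)%N by apply: prime_gt1; apply: (pcharf_prime hp).
have hpow : forall y x, D (y ^+ (p ^ m) * x) = y ^+ (p ^ m) * D x.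
  move=> y x; apply/eqP; rewrite eq_sym -subr_eq0.
  have := iter_big hord (bs := nseq (p ^ m) y) _ x.
  rewrite size_nseq ltn_expl // => /(_ isT).
  rewrite iter_nseq (frobn _ _ (R := {poly K}) (p := p)) ?pchar_poly //.
  by rewrite -rmorphXn phiB phiXn -[X in phi _ _ _ X]mulr1 phiC phi1 => ->.
exists m; exists m; split => //; split => // a x Ha.
pose S := fun a => forall x, D (a * x) = a * D x.
have SF : is_subfield S.
  split.
  - by move=> z; rewrite !mul0r D0.
  - by move=> z; rewrite !mul1r.
  - by move=> u v hu hv z; rewrite !mulrBl hadd DN hu hv.
  - by move=> u v hu hv z; rewrite -!mulrA hu hv.
  - move=> u hu z; have [->|u0] := eqVneq u 0; first by rewrite invr0 !mul0r D0.
    by rewrite -{1}(mul1r (D _)) -(mulVf u0) -mulrA -hu mulrA mulfV // mul1r.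
apply: (Ha S SF) => y [Wy|[c ->]]; last by move=> z; apply: hpow.
by move=> z; apply: hlin.
Qed.
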